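(* Let $\mathcal{H}$ be a finite-dimensional complex Hilbert space and $k\ge 2$. (i) A bosonic pure state $\rho\in\mathbb{P}(\mathcal{H}^{\vee k})$ is entangled if and only if it does not lie in the range of the map $\operatorname{Seg}^\vee_k:\mathbb{P}\mathcal{H}\to\mathbb{P}(\mathcal{H}^{\vee k})$, $\rho_x\mapsto\rho_{x^{k}}$, where $x^k=x\vee\cdots\vee x=x\otimes\cdots\otimes x$ ($k$ factors). (ii) A fermionic pure state $\rho\in\mathbb{P}(\mathcal{H}^{\wedge k})$ is entangled if and only if it does not lie in the range of the map $\operatorname{Seg}^\wedge_k:(\mathbb{P}\mathcal{H})^{\times k}_\circ\to\mathbb{P}(\mathcal{H}^{\wedge k})$, $(\rho_{x_1},\dots,\rho_{x_k})\mapsto\rho_{x_1\wedge\cdots\wedge x_k}$. (iii) A mixed bosonic (resp. fermionic) state on $\mathcal{H}^{\vee k}$ (resp. $\mathcal{H}^{\wedge k}$) is entangled if and only if it lies outside the convex hull of the range of $\operatorname{Seg}^\vee_k$ (resp. $\operatorname{Seg}^\wedge_k$), where pure states are identified with rank-one orthogonal projectors.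
   Context: For $0\neq x$ in a Hilbert space, $\rho_x=|x\rangle\langle x|/\|x\|^2$; pure states on a Hilbert space $V$ are identified with $\mathbb{P}V$ via $x\mapsto\rho_x$. $\mathcal{H}^{\vee k}\subset\mathcal{H}^{\otimes k}$ (resp. $\mathcal{H}^{\wedge k}$) is the subspace of totally symmetric (resp. antisymmetric) tensors, with $f_1\vee\cdots\vee f_k=\frac{1}{k!}\sum_{\sigma\in S_k}f_{\sigma(1)}\otimes\cdots\otimes f_{\sigma(k)}$ and $f_1\wedge\cdots\wedge f_k=\frac{1}{k!}\sum_{\sigma}(-1)^\sigma f_{\sigma(1)}\otimes\cdots\otimes f_{\sigma(k)}$. $(\mathbb{P}\mathcal{H})^{\times k}_\circ=\{(\rho_{x_1},\dots,\rho_{x_k}): x_1\wedge\cdots\wedge x_k\neq0\}$. S-rank: for $u\in\mathcal{H}^{\otimes k}$, the contraction $\imath_\nu u$ with $\nu\in\mathcal{H}^{\otimes(k-1)}$ is the linear extension of $\imath_{g_1\otimes\cdots\otimes g_{k-1}}(f_1\otimes\cdots\otimes f_k)=\prod_{i=1}^{k-1}\langle f_i|g_i\rangle\, f_k$; for $\sigma\in S_k$, $\sigma(f_1\otimes\cdots\otimes f_k)=f_{\sigma(1)}\otimes\cdots\otimes f_{\sigma(k)}$. The S-rank of $u$ is the maximum over $\sigma\in S_k$ of $\dim\{\imath_\nu\sigma(u):\nu\in\mathcal{H}^{\otimes(k-1)}\}$. A simple symmetric (resp. antisymmetric) tensor is a nonzero element of $\mathcal{H}^{\vee k}$ (resp.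 $\mathcal{H}^{\wedge k}$) of minimal S-rank among nonzero elements of that space. A bosonic (fermionic) pure state $\rho_x$, $0\ne x\in\mathcal{H}^{\vee k}$ (resp. $\mathcal{H}^{\wedge k}$), is simple if $x$ is a simple symmetric (resp. antisymmetric) tensor, and entangled otherwise; a mixed bosonic (fermionic) state is simple if it is a convex combination of simple bosonic (fermionic) pure states, and entangled otherwise. *)

(* Defs.v *)
From HB Require Import structures.
From mathcomp Require Import all_boot all_order all_fingroup all_algebra.
From Stdlib Require Import ClassicalEpsilon.
Set Implicit Arguments. Unset Strict Implicit. Unset Printing Implicit Defensive.
Import Order.TTheory GRing.Theory Num.Theory.
Local Open Scope ring_scope.

(* The Hilbert space H = C^n, vectors are row vectors 'rV[C]_n, with the
   inner product <f|g> = \sum_a f_a (g_a)^* .  C is any numClosedFieldType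
   (e.g. the complex numbers). *)

Notation midx n k := {ffun 'I_k -> 'I_n}.

(* tensors in H^{(x)k}, written in the product basis *)
Notation tensor C n k := {ffun midx n k -> C^o}.

(* operators on H^{(x)k}, as matrices indexed by pairs of multi-indices *)
Notation op C n k := {ffun (midx n k * midx n k)%type -> C^o}.

Section Defs.
Variables (C : numClosedFieldType) (n k : nat).

Definition tprod (f : 'I_k -> 'rV[C]_n) : tensor C n k :=
  [ffun a : midx n k => \prod_(i < k) f i 0 (a i)].

Definition xpow (x : 'rV[C]_n) : tensor C n k := tprod (fun _ => x).

Definition wedge (f : 'I_k -> 'rV[C]_n) : tensor C n k :=
  (k`!%:R)^-1 *: \sum_(s : 'S_k) ((-1) ^+ odd_perm s) *: tprod (fun i => f (s i)).

(* s (f_1 (x) ... (x) f_k) = f_{s 1} (x) ... (x) f_{s k}, extended linearly *)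
Definition permT (s : 'S_k) (u : tensor C n k) : tensor C n k :=
  [ffun a : midx n k => u [ffun i => a ((s^-1)%g i)]].

Definition symmetric (u : tensor C n k) : Prop := forall s, permT s u = u.
Definition antisymmetric (u : tensor C n k) : Prop :=
  forall s, permT s u = ((-1) ^+ odd_perm s) *: u.

(* the multi-index (a_1,...,a_{k-1},j) *)
Definition join (a : midx n k.-1) (j : 'I_n) : midx n k :=
  [ffun i : 'I_k => if (insub (val i) : option 'I_k.-1) is Some i' then a i' else j].

(* contraction i_nu u, the linear extension of
   i_{g_1(x)..(x)g_{k-1}} (f_1(x)..(x)f_k) = \prod_i <f_i|g_i> f_k *)
Definition contr (nu : tensor C n k.-1) (u : tensor C n k) : 'rV[C]_n :=
  \row_j \sum_(a : midx n k.-1) u (join a j) * (nu a)^*.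

Definition pb (P : Prop) : bool := if excluded_middle_informative P then true else false.

Definition dimS (S : 'rV[C]_n -> Prop) : nat :=
  \max_(m < n.+1 | pb (exists t : m.-tuple 'rV[C]_n, (forall i, S (tnth t i)) /\ free t)) m.

Definition srank (u : tensor C n k) : nat :=
  \max_(s : 'S_k) dimS (fun w => exists nu : tensor C n k.-1, w = contr nu (permT s u)).

Definition simple_sym (u : tensor C n k) : Prop :=
  [/\ symmetric u, u != 0 &
      forall v, symmetric v -> v != 0 -> (srank u <= srank v)%N].

Definition simple_antisym (u : tensor C n k) : Prop :=
  [/\ antisymmetric u, u != 0 &
      forall v, antisymmetric v -> v != 0 -> (srank u <= srank v)%N].

Definition rho (x : tensor C n k) : op C n k :=
  [ffun p : midx n k * midx n k =>
     x p.1 * (x p.2)^* / \sum_(a : midx n k) x a * (x a)^*].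

Definition boson_pure (r : op C n k) : Prop :=
  exists y, [/\ symmetric y, y != 0 & r = rho y].
Definition fermion_pure (r : op C n k) : Prop :=
  exists y, [/\ antisymmetric y, y != 0 & r = rho y].
Definition simple_boson_pure (r : op C n k) : Prop :=
  exists y, simple_sym y /\ r = rho y.
Definition simple_fermion_pure (r : op C n k) : Prop :=
  exists y, simple_antisym y /\ r = rho y.

Definition seg_sym_range (r : op C n k) : Prop :=
  exists x : 'rV[C]_n, x != 0 /\ r = rho (xpow x).
Definition seg_wedge_range (r : op C n k) : Prop :=
  exists f : 'I_k -> 'rV[C]_n, wedge f != 0 /\ r = rho (wedge f).

Definition apply_op (r : op C n k) (v : tensor C n k) : tensor C n k :=
  [ffun a => \sum_(b : midx n k) r (a, b) * v b].
Definition psd (r : op C n k) : Prop :=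
  forall v : tensor C n k, 0 <= \sum_(a : midx n k) (v a)^* * apply_op r v a.
Definition trace1 (r : op C n k) : Prop := \sum_(a : midx n k) r (a, a) = 1.
(* density operators on H^{vee k} (resp. H^{wedge k}), seen inside H^{(x)k} *)
Definition boson_mixed (r : op C n k) : Prop :=
  [/\ psd r, trace1 r & forall v, symmetric (apply_op r v)].
Definition fermion_mixed (r : op C n k) : Prop :=
  [/\ psd r, trace1 r & forall v, antisymmetric (apply_op r v)].

Definition conv (S : op C n k -> Prop) (r : op C n k) : Prop :=
  exists (m : nat) (c : 'I_m -> C) (p : 'I_m -> op C n k),
    [/\ forall i, 0 <= c i, \sum_i c i = 1, forall i, S (p i)
      & r = \sum_i c i *: p i].

End Defs.

(* Main.v *)
Require Import Defs.
From HB Require Import structures.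
From mathcomp Require Import all_boot all_order all_fingroup all_algebra.
From Stdlib Require Import ClassicalEpsilon.
Set Implicit Arguments. Unset Strict Implicit. Unset Printing Implicit Defensive.
Import Order.TTheory GRing.Theory Num.Theory.
Local Open Scope ring_scope.

Lemma pbP (P : Prop) : pb P <-> P.
Proof. by rewrite /pb; case: excluded_middle_informative. Qed.

Section Aux.
Variables (C : numClosedFieldType) (n k' : nat).
Local Notation k := k'.+1.
Local Notation T := (tensor C n k).

Definition slice (u : T) (a : midx n k') : 'rV[C]_n := \row_j u (@join n k a j).
Definition U (u : T) : {vspace 'rV[C]_n} := (\sum_(a : midx n k') <[slice u a]>)%VS.

Lemma contr_slice (nu : tensor C n k') (u : T) :
  @contr C n k nu u = \sum_a (nu a)^* *: slice u a.
Proof.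
apply/rowP => j; rewrite !mxE summxE; apply: eq_bigr => a _.
by rewrite !mxE mulrC.
Qed.

Lemma memU w (u : T) : (exists nu : tensor C n k', w = @contr C n k nu u) <-> w \in U u.
Proof.
split.
  move=> [nu ->]; rewrite contr_slice; apply: memv_sumr => a _.
  by rewrite memvZ // memv_line.
move/memv_sumP => [vs Hvs ->].
have Hc : forall a, exists c, vs a = c *: slice u a.
  by move=> a; apply/vlineP; exact: Hvs.
pose c a := proj1_sig (constructive_indefinite_description _ (Hc a)).
exists [ffun a => (c a)^*]; rewrite contr_slice; apply: eq_bigr => a _.
by rewrite ffunE conjCK (proj2_sig (constructive_indefinite_description _ (Hc a))).
Qed.

Lemma dimS_vs (V : {vspace 'rV[C]_n}) (S : 'rV[C]_n -> Prop) :
  (forall w, S w <-> w \in V) -> dimS S = \dim V.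
Proof.
move=> HS; rewrite /dimS; apply/eqP; rewrite eqn_leq; apply/andP; split.
  apply/bigmax_leqP => m /pbP [t [Ht fr]].
  rewrite -(size_tuple t) -(eqP fr) dimvS //.
  by apply/span_subvP => x /tnthP [i ->]; apply/HS.
have hd : (\dim V < n.+1)%N.
  by rewrite ltnS (leq_trans (dimvS (subvf V))) // dimvf /dim /= mul1n.
pose i0 := Ordinal hd.
have -> : \dim V = i0 by [].
apply: (@leq_bigmax_cond _ (fun m : 'I_n.+1 => pb (exists t : m.-tuple 'rV[C]_n, (forall i, S (tnth t i)) /\ free t)) (fun m => nat_of_ord m) i0).
apply/pbP; exists (vbasis V); split.
  by move=> i; apply/HS; apply: vbasis_mem; apply: mem_tnth.
exact: basis_free (vbasisP V).
Qed.

Lemma srankE (u : T) : srank u = \max_(s : 'S_k) \dim (U (permT s u)).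
Proof.
rewrite /srank; apply: eq_bigr => s _; apply: dimS_vs => w; exact: memU.
Qed.


Lemma U_sub (u : T) (V : {vspace 'rV[C]_n}) :
  (forall a, slice u a \in V) -> (U u <= V)%VS.
Proof. by move=> H; apply/subv_sumP => a _; rewrite -memvE. Qed.

Lemma slice_in (u : T) a : slice u a \in U u.
Proof. by rewrite memvE; apply: (sumv_sup a) => //; rewrite -memvE memv_line. Qed.

Lemma sliceZ (c : C) (u : T) a : slice (c *: u) a = c *: slice u a.
Proof. by apply/rowP => j; rewrite !mxE ffunE. Qed.

Lemma sliceD (u v : T) a : slice (u + v) a = slice u a + slice v a.
Proof. by apply/rowP => j; rewrite !mxE ffunE. Qed.

Lemma UZ (c : C) (u : T) : (U (c *: u) <= U u)%VS.
Proof. by apply: U_sub => a; rewrite sliceZ memvZ // slice_in. Qed.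

Lemma UD (u v : T) : (U (u + v)%R <= U u + U v)%VS.
Proof.
apply: U_sub => a; rewrite sliceD memv_add //; exact: slice_in.
Qed.

Lemma join_widen a j (i : 'I_k') : @join n k a j (widen_ord (leqnSn k') i) = a i.
Proof.
rewrite ffunE; case: insubP => [i' _ /= hv|]; last by rewrite /= ltn_ord.
by congr (a _); apply: val_inj.
Qed.

Lemma join_max a j : @join n k a j ord_max = j.
Proof.
rewrite ffunE; case: insubP => [i' _ /= hv|] //.
by move: (ltn_ord i'); rewrite hv ltnn.
Qed.

Lemma ord_widen (l : 'I_k) : l != ord_max -> exists i : 'I_k', l = widen_ord (leqnSn k') i.
Proof.
move=> hl; have hl' : (l < k')%N.
  rewrite ltn_neqAle -ltnS ltn_ord andbT; apply: contra hl => /eqP h.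
  by apply/eqP; apply: val_inj.
by exists (Ordinal hl'); apply: val_inj.
Qed.

Definition upd (c : midx n k) (i : 'I_k) (j : 'I_n) : midx n k :=
  [ffun l => if l == i then j else c l].

Lemma line_slice (u : T) c i :
  \row_j u (upd c i j) \in U (permT (tperm i ord_max) u).
Proof.
set t := tperm i ord_max.
pose a : midx n k' := [ffun i' => c (t (widen_ord (leqnSn k') i'))].
suff -> : \row_j u (upd c i j) = slice (permT t u) a by apply: slice_in.
apply/rowP => j; rewrite !mxE ffunE; congr (u _); apply/ffunP => l.
rewrite [RHS]ffunE tpermV /upd ffunE; case: eqP => [->|/eqP hli].
  by rewrite /t tpermL join_max.
have : t l != ord_max.
  apply: contra hli => /eqP h; apply/eqP; apply: (@perm_inj _ t).
  by rewrite h /t tpermL.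
move/ord_widen => [i' hi']; rewrite hi' join_widen ffunE -hi' /t tpermK //.
Qed.


Lemma permT1 (u : T) : permT 1 u = u.
Proof. by apply/ffunP => c; rewrite ffunE; congr (u _); apply/ffunP => i; rewrite ffunE invg1 perm1. Qed.

Lemma UZ_eq (c : C) (u : T) : c != 0 -> U (c *: u) = U u.
Proof.
move=> hc; apply/eqP; rewrite eqEsubv UZ /=.
by rewrite -{1}(scalerK hc u) UZ.
Qed.

Lemma srank_dim (u : T) : (forall s, U (permT s u) = U u) -> srank u = \dim (U u).
Proof.
move=> H; rewrite srankE; apply/eqP; rewrite eqn_leq; apply/andP; split.
  by apply/bigmax_leqP => s _; rewrite H.
by rewrite -{1}(permT1 u); exact: leq_bigmax.
Qed.

Lemma sym_U (u : T) : Defs.symmetric u -> forall s, U (permT s u) = U u.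
Proof. by move=> hu s; rewrite hu. Qed.

Lemma antisym_U (u : T) : Defs.antisymmetric u -> forall s, U (permT s u) = U u.
Proof. by move=> hu s; rewrite hu UZ_eq // signr_eq0. Qed.

Lemma sym_perm (u : T) (c : midx n k) (s : 'S_k) :
  Defs.symmetric u -> u [ffun i => c (s i)] = u c.
Proof.
move=> hu; rewrite -{2}(hu s^-1%g) ffunE; congr (u _); apply/ffunP => i.
by rewrite !ffunE invgK.
Qed.

Lemma antisym_perm (u : T) (c : midx n k) (s : 'S_k) :
  Defs.antisymmetric u -> u [ffun i => c (s i)] = (-1) ^+ odd_perm s * u c.
Proof.
move=> hu; have := congr1 (fun v : T => v c) (hu s^-1%g).
rewrite !ffunE odd_permV => E.
have -> : [ffun i => c (s i)] = [ffun i => c ((s^-1)^-1 i)%g] by apply/ffunP=> i; rewrite !ffunE invgK.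
exact: E.
Qed.

Lemma antisym_rep (u : T) (c : midx n k) (i l : 'I_k) :
  Defs.antisymmetric u -> i != l -> c i = c l -> u c = 0.
Proof.
move=> hu hil hc; have := antisym_perm c (tperm i l) hu.
have -> : [ffun m => c (tperm i l m)] = c.
  apply/ffunP => m; rewrite ffunE; case: (tpermP i l m) => [->|->|] //.
rewrite odd_tperm hil expr1 mulN1r => /eqP; rewrite -subr_eq0 opprK.
by rewrite -mulr2n mulrn_eq0 /= => /eqP.
Qed.

Lemma vanish (d : T) (P : pred 'I_n) :
  (forall c : midx n k, (forall i, P (c i)) -> d c = 0) ->
  (forall (c : midx n k) i, ~~ P (c i) -> exists m (g : 'I_m -> 'I_n) (al : 'I_m -> C),
      (forall l, P (g l)) /\ d c = \sum_l al l * d (upd c i (g l))) ->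
  d = 0.
Proof.
move=> H0 H1.
suff H : forall N (c : midx n k), (#|[pred i | ~~ P (c i)]| <= N)%N -> d c = 0.
  by apply/ffunP => c; rewrite ffunE (H _ c (leqnn _)).
elim=> [|N IH] c hc.
  apply: H0 => i; apply/negPn; apply/negP => hi.
  by move: hc; rewrite leqn0 => /eqP/card0_eq/(_ i); rewrite !inE hi.
case: (boolP [exists i, ~~ P (c i)]) => [/existsP [i hi]|hall]; last first.
  apply: H0 => i; apply/negPn; apply/negP => hi.
  by move/existsP: hall; apply; exists i.
have [m [g [al [hg ->]]]] := H1 c i hi.
apply: big1 => l _; rewrite (IH _) ?mulr0 //.
rewrite -ltnS (leq_trans _ hc) // (cardD1 i [pred i | ~~ P (c i)]) inE hi add1n ltnS.
apply: subset_leq_card; apply/subsetP => x; rewrite !inE /upd ffunE.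
by case: eqP => [->|_ ->]; rewrite ?hg.
Qed.


Lemma rhoZ (lam : C) (y : T) : lam != 0 -> rho (lam *: y) = rho y.
Proof.
move=> hl; apply/ffunP => p; rewrite !ffunE.
have E : forall a b : C, (lam *: (a : C^o)) * (lam *: (b : C^o))^* = (lam * lam^*) * (a * b^*).
  by move=> a b; rewrite /GRing.scale /= rmorphM mulrACA.
rewrite E (eq_bigr (fun a => (lam * lam^*) * (y a * (y a)^*))); last first.
  by move=> a _; rewrite ffunE E.
rewrite -mulr_sumr invfM mulrACA divff ?mul1r // mul_conjC_eq0 //.
Qed.


Lemma permTD (s : 'S_k) (u v : T) : permT s (u + v) = permT s u + permT s v.
Proof. by apply/ffunP => c; rewrite !ffunE. Qed.

Lemma permTZ (s : 'S_k) (a : C) (u : T) : permT s (a *: u) = a *: permT s u.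
Proof. by apply/ffunP => c; rewrite !ffunE. Qed.

Lemma upd_id (c : midx n k) i : upd c i (c i) = c.
Proof. by apply/ffunP => l; rewrite ffunE; case: eqP => [->|]. Qed.

Lemma U_pos (u : T) (c : midx n k) : u c != 0 -> (0 < \dim (U u))%N.
Proof.
move=> hc; have := line_slice u c ord_max; rewrite tperm1 permT1 => hw.
rewrite lt0n dimv_eq0; apply: contraNneq hc => h0.
move: hw; rewrite h0 memv0 => /eqP/rowP/(_ (c ord_max)); rewrite !mxE upd_id => ->.
by [].
Qed.

Lemma tensor_nz (u : T) : u != 0 -> exists c, u c != 0.
Proof.
move=> hu; apply/existsP; apply: contraNT hu; rewrite negb_exists => /forallP H.
by apply/eqP/ffunP => c; rewrite ffunE; apply/eqP; rewrite -[_ == _]negbK H.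
Qed.

Lemma row_nz (x : 'rV[C]_n) : x != 0 -> exists j, x 0 j != 0.
Proof.
move=> hx; apply/existsP; apply: contraNT hx; rewrite negb_exists => /forallP H.
by apply/eqP/rowP => j; rewrite !mxE; apply/eqP; rewrite -[_ == _]negbK H.
Qed.

Lemma scaleTE (a : C) (u : T) c : (a *: u) c = a * u c.
Proof. by rewrite ffunE. Qed.

Lemma addTE (u v : T) c : (u + v) c = u c + v c.
Proof. by rewrite ffunE. Qed.

Lemma slice_xpow (x : 'rV[C]_n) a :
  slice (xpow k x) a = (\prod_(i < k') x 0 (a i)) *: x.
Proof.
apply/rowP => j; rewrite !mxE ffunE big_ord_recr /= join_max.
by congr (_ * _); apply: eq_bigr => i _; rewrite join_widen.
Qed.

Lemma xpow_sym (x : 'rV[C]_n) : Defs.symmetric (xpow k x).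
Proof.
move=> s; apply/ffunP => c; rewrite !ffunE (reindex_inj (@perm_inj _ s)) /=.
by apply: eq_bigr => i _; rewrite ffunE permK.
Qed.

Lemma xpow_const (x : 'rV[C]_n) j : xpow k x [ffun=> j] = x 0 j ^+ k.
Proof.
by rewrite ffunE (eq_bigr (fun _ => x 0 j)) ?prodr_const ?card_ord // => i _; rewrite ffunE.
Qed.

Lemma xpow_nz (x : 'rV[C]_n) : x != 0 -> xpow k x != 0.
Proof.
move=> /row_nz [j hj]; apply/eqP => /ffunP/(_ [ffun=> j]).
rewrite xpow_const ffunE => /eqP; rewrite expf_eq0 (negbTE hj) andbF //.
Qed.

Lemma U_xpow (x : 'rV[C]_n) : (U (xpow k x) <= <[x]>)%VS.
Proof. by apply: U_sub => a; rewrite slice_xpow memvZ // memv_line. Qed.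

Lemma srank_xpow (x : 'rV[C]_n) : (srank (xpow k x) <= 1)%N.
Proof.
rewrite srank_dim; last exact: sym_U (@xpow_sym x).
by rewrite (leq_trans (dimvS (U_xpow x))) // dim_vline leq_b1.
Qed.

Lemma srank_sym_pos (v : T) : Defs.symmetric v -> v != 0 -> (1 <= srank v)%N.
Proof.
move=> hs /tensor_nz [c hc]; rewrite srank_dim; last exact: sym_U.
exact: U_pos hc.
Qed.

Lemma simple_xpow (x : 'rV[C]_n) : x != 0 -> simple_sym (xpow k x).
Proof.
move=> hx; split; [exact: xpow_sym | exact: xpow_nz |].
by move=> v hs hv; apply: leq_trans (srank_xpow x) (srank_sym_pos hs hv).
Qed.

Lemma simple_sym_xpow (y : T) : simple_sym y ->
  exists x, x != 0 /\ exists lam, lam != 0 /\ y = lam *: xpow k x.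
Proof.
move=> [hs hy hmin]; have [c0 hc0] := tensor_nz hy.
pose x := \row_j y (upd c0 ord_max j).
have hxU : x \in U y by have := line_slice y c0 ord_max; rewrite tperm1 permT1.
set j0 := c0 ord_max.
have hxj0 : x 0 j0 = y c0 by rewrite mxE upd_id.
have hx : x != 0 by apply: contraNneq hc0 => h; rewrite -hxj0 h mxE.
have hx0 : x 0 j0 != 0 by rewrite hxj0.
have hUy : U y = <[x]>%VS.
  apply/eqP; rewrite eq_sym eqEdim -memvE hxU /= dim_vline hx.
  rewrite -(srank_dim (sym_U hs)); apply: leq_trans (srank_xpow x).
  by apply: hmin; [exact: xpow_sym | exact: xpow_nz].
pose lam := y [ffun=> j0] / x 0 j0 ^+ k.
pose d := y + (- lam) *: xpow k x.
have hd : Defs.symmetric d.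
  by move=> s; rewrite /d permTD permTZ hs xpow_sym.
have hUd : (U d <= U y)%VS.
  apply: subv_trans (UD _ _) _; rewrite -{2}(addvv (U y)) addvS //.
  by apply: subv_trans (UZ _ _) _; rewrite hUy U_xpow.
have d0 : d = 0.
  apply: (@vanish d (pred1 j0)).
    move=> c hc; have -> : c = [ffun=> j0].
      by apply/ffunP => i; rewrite ffunE; apply/eqP; exact: hc.
    rewrite /d addTE scaleTE xpow_const /lam mulNr divfK ?subrr //.
    by rewrite expf_neq0.
  move=> c i hci.
  have hw : \row_j d (upd c i j) \in <[x]>%VS.
    rewrite -hUy; apply: (subvP hUd).
    by have := line_slice d c i; rewrite sym_U.
  have [t ht] := vlineP _ _ hw.
  have Ew : forall j, d (upd c i j) = t * x 0 j.
    by move=> j; have := congr1 (fun w : 'rV_n => w 0 j) ht; rewrite !mxE.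
  exists 1%N, (fun _ => j0), (fun _ => x 0 (c i) / x 0 j0); split; first by move=> _ /=.
  rewrite big_ord1 Ew -{1}(upd_id c i) Ew.
  by rewrite mulrCA -mulrA mulVf ?mulr1 // mulrC.
exists x; split => //; exists lam; split.
  apply: contraNneq hy => hl; move/eqP: d0; rewrite /d hl oppr0 scale0r addr0.
  by [].
by apply/eqP; rewrite -subr_eq0 -scaleNr; apply/eqP.
Qed.


Lemma wedgeE (f : 'I_k -> 'rV[C]_n) c :
  wedge f c = (k`!%:R)^-1 * \sum_(s : 'S_k) (-1) ^+ odd_perm s * \prod_i f (s i) 0 (c i).
Proof.
rewrite /wedge scaleTE sum_ffunE; congr (_ * _); apply: eq_bigr => s _.
by rewrite scaleTE ffunE.
Qed.

Lemma wedge_antisym (f : 'I_k -> 'rV[C]_n) : Defs.antisymmetric (wedge f).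
Proof.
move=> s; apply/ffunP => c; rewrite scaleTE ffunE !wedgeE mulrCA; congr (_ * _).
rewrite mulr_sumr (reindex_inj (mulgI s^-1)%g); apply: eq_bigr => t _.
rewrite odd_permM odd_permV signr_addb -mulrA; congr (_ * _); congr (_ * _).
rewrite (reindex_inj (@perm_inj _ s)); apply: eq_bigr => i _.
by rewrite ffunE permM !permK.
Qed.

Lemma slice_sum (I : finType) (F : I -> T) a :
  slice (\sum_i F i) a = \sum_i slice (F i) a.
Proof. by apply/rowP => j; rewrite mxE !summxE sum_ffunE; apply: eq_bigr => i _; rewrite mxE. Qed.

Lemma slice_tprod (g : 'I_k -> 'rV[C]_n) a :
  slice (tprod g) a = (\prod_(i < k') g (widen_ord (leqnSn k') i) 0 (a i)) *: g ord_max.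
Proof.
apply/rowP => j; rewrite !mxE ffunE big_ord_recr /= join_max.
by congr (_ * _); apply: eq_bigr => i _; rewrite join_widen.
Qed.

Definition spanF (f : 'I_k -> 'rV[C]_n) := <<[tuple f i | i < k]>>%VS.

Lemma memF (f : 'I_k -> 'rV[C]_n) i : f i \in spanF f.
Proof. by apply: memv_span; rewrite -(tnth_mktuple f i) mem_tnth. Qed.

Lemma U_wedge (f : 'I_k -> 'rV[C]_n) : (U (wedge f) <= spanF f)%VS.
Proof.
apply: U_sub => a; rewrite sliceZ memvZ // slice_sum; apply: memv_suml => s _.
by rewrite sliceZ memvZ // slice_tprod memvZ // memF.
Qed.

Lemma srank_wedge (f : 'I_k -> 'rV[C]_n) : (srank (wedge f) <= k)%N.
Proof.
rewrite srank_dim; last exact: antisym_U (@wedge_antisym f).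
apply: leq_trans (dimvS (U_wedge f)) _.
by apply: leq_trans (dim_span _) _; rewrite size_tuple.
Qed.


Section Dual.
Variables (u : T) (b : midx n k).
Hypotheses (hu : Defs.antisymmetric u) (hb : u b != 0).

Definition sl (l : 'I_k) : 'rV[C]_n := \row_j u (upd b l j).

Lemma b_inj : injective b.
Proof.
move=> i l hil; case: (eqVneq i l) => // hne.
by move: hb; rewrite (antisym_rep hu hne hil) eqxx.
Qed.

Lemma sl_val (l m : 'I_k) : sl l 0 (b m) = if l == m then u b else 0.
Proof.
rewrite mxE; case: eqP => [->|/eqP hlm]; first by rewrite upd_id.
apply: (antisym_rep (i := l) (l := m)) => //.
by rewrite /upd !ffunE eqxx eq_sym (negbTE hlm).
Qed.

Lemma sl_in (l : 'I_k) : sl l \in U u.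
Proof. by have := line_slice u b l; rewrite antisym_U. Qed.

Definition Xs := [tuple sl l | l < k].

Lemma Xs_nth (l : 'I_k) : Xs`_l = sl l.
Proof. by rewrite -tnth_nth tnth_mktuple. Qed.

Lemma Xs_free : free Xs.
Proof.
apply/freeP => c hc m.
have := congr1 (fun w : 'rV_n => w 0 (b m)) hc; rewrite summxE mxE.
rewrite (bigD1 m) //= big1 => [|l hl]; last by rewrite Xs_nth mxE sl_val (negbTE hl) mulr0.
rewrite Xs_nth mxE sl_val eqxx addr0 => /eqP; rewrite mulf_eq0 (negbTE hb) orbF.
by move/eqP.
Qed.

Lemma Xs_sub : (<<Xs>> <= U u)%VS.
Proof. by apply/span_subvP => w /mapP [l _ ->]; exact: sl_in. Qed.

Lemma dim_Xs : \dim <<Xs>> = k.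
Proof. by have := Xs_free; rewrite /free size_tuple => /eqP. Qed.

Lemma dim_lower : (k <= \dim (U u))%N.
Proof. by rewrite -{1}dim_Xs dimvS // Xs_sub. Qed.

Lemma wedge_sl_b : wedge sl b = (k`!%:R)^-1 * u b ^+ k.
Proof.
rewrite wedgeE; congr (_ * _); rewrite (bigD1 1%g) //= [X in _ + X]big1 => [|s hs].
  rewrite addr0 odd_perm1 expr0 mul1r (eq_bigr (fun _ => u b)) => [|i _].
    by rewrite prodr_const card_ord.
  by rewrite perm1 sl_val eqxx.
have [i hi] : exists i, s i != i.
  apply/existsP; apply: contraNT hs; rewrite negb_exists => /forallP H.
  by apply/eqP/permP => i; rewrite perm1; apply/eqP; rewrite -[_ == _]negbK H.
by rewrite (bigD1 i) //= sl_val (negbTE hi) mul0r mulr0.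
Qed.

Lemma wedge_sl_nz : wedge sl b != 0.
Proof.
rewrite wedge_sl_b mulf_eq0 negb_or invr_eq0 pnatr_eq0 -lt0n fact_gt0 /=.
by rewrite expf_neq0.
Qed.

End Dual.

Lemma srank_antisym_pos (v : T) : Defs.antisymmetric v -> v != 0 -> (k <= srank v)%N.
Proof.
move=> hs /tensor_nz [c hc]; rewrite srank_dim; last exact: antisym_U.
exact: dim_lower hc.
Qed.

Lemma simple_wedge (f : 'I_k -> 'rV[C]_n) : wedge f != 0 -> simple_antisym (wedge f).
Proof.
move=> hf; split; [exact: wedge_antisym | exact: hf |].
by move=> v hs hv; apply: leq_trans (srank_wedge f) (srank_antisym_pos hs hv).
Qed.


Lemma simple_antisym_wedge (y : T) : simple_antisym y ->
  exists f, wedge f != 0 /\ exists lam, lam != 0 /\ y = lam *: wedge f.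
Proof.
move=> [hs hy hmin]; have [b hb] := tensor_nz hy.
pose f := sl y b.
have hfb : wedge f b != 0 := wedge_sl_nz hs hb.
have hf : wedge f != 0 by apply: contraNneq hfb => ->; rewrite ffunE.
have hUy : U y = <<Xs y b>>%VS.
  apply/eqP; rewrite eq_sym eqEdim Xs_sub //= dim_Xs //.
  rewrite -(srank_dim (antisym_U hs)); apply: leq_trans (srank_wedge f).
  by apply: hmin; [exact: wedge_antisym | exact: hf].
have hspan : spanF f = <<Xs y b>>%VS by [].
pose lam := y b / wedge f b.
pose d := y + (- lam) *: wedge f.
have hd : Defs.antisymmetric d.
  move=> s; rewrite /d permTD permTZ hs (wedge_antisym f s) scalerDr; congr (_ + _).
  by rewrite scalerA [RHS]scalerA mulrC.
have hUd : (U d <= U y)%VS.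
  apply: subv_trans (UD _ _) _; rewrite -{2}(addvv (U y)) addvS //.
  by apply: subv_trans (UZ _ _) _; rewrite hUy -hspan U_wedge.
have d0 : d = 0.
  apply: (@vanish d [pred j | [exists l, b l == j]]).
    move=> c hc.
    case: (boolP [exists i, exists l, (i != l) && (c i == c l)]) => [/existsP [i /existsP [l /andP [hil /eqP hcl]]]|hno].
      exact: antisym_rep hd hil hcl.
    have hg : forall i, exists l, b l == c i := fun i => existsP (hc i).
    pose g i := xchoose (hg i).
    have hbg : forall i, b (g i) = c i := fun i => eqP (xchooseP (hg i)).
    have ginj : injective g.
      move=> i l e; apply/eqP; apply: contraNT hno => hil; apply/existsP; exists i.
      by apply/existsP; exists l; rewrite hil -hbg e hbg eqxx.
    have -> : c = [ffun i => b (perm ginj i)] by apply/ffunP => i; rewrite ffunE permE hbg.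
    rewrite antisym_perm // /d addTE scaleTE /lam mulNr divfK ?subrr ?mulr0 //.
  move=> c i hci.
  have hw : \row_j d (upd c i j) \in <<Xs y b>>%VS.
    rewrite -hUy; apply: (subvP hUd).
    by have := line_slice d c i; rewrite antisym_U.
  have Ew := coord_span hw.
  set w := \row_j d (upd c i j) in Ew.
  have ev : forall j, w 0 j = \sum_l coord (Xs y b) l w * sl y b l 0 j.
    by move=> j; rewrite {1}Ew summxE; apply: eq_bigr => l _; rewrite mxE Xs_nth.
  have co : forall m, coord (Xs y b) m w = d (upd c i (b m)) / y b.
    move=> m; have := ev (b m); rewrite [w 0 _]mxE (bigD1 m) //= big1 => [|l hl].
      by rewrite sl_val // eqxx addr0 => ->; rewrite mulfK.
    by rewrite sl_val // (negbTE hl) mulr0.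
  exists k, b, (fun l => sl y b l 0 (c i) / y b); split.
    by move=> l /=; apply/existsP; exists l.
  have := ev (c i); rewrite [w 0 _]mxE upd_id => ->; apply: eq_bigr => l _.
  by rewrite co mulrC mulrA mulrAC.
exists f; split => //; exists lam; split.
  by rewrite mulf_neq0 // invr_neq0.
by apply/eqP; rewrite -subr_eq0 -scaleNr; apply/eqP.
Qed.


Lemma boson_eq (r : op C n k) : simple_boson_pure r <-> seg_sym_range r.
Proof.
split.
  move=> [y [hy ->]]; have [x [hx [lam [hl ->]]]] := simple_sym_xpow hy.
  by exists x; split => //; rewrite rhoZ.
by move=> [x [hx ->]]; exists (xpow k x); split => //; exact: simple_xpow.
Qed.

Lemma fermion_eq (r : op C n k) : simple_fermion_pure r <-> seg_wedge_range r.
Proof.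
split.
  move=> [y [hy ->]]; have [f [hf [lam [hl ->]]]] := simple_antisym_wedge hy.
  by exists f; split => //; rewrite rhoZ.
by move=> [f [hf ->]]; exists (wedge f); split => //; exact: simple_wedge.
Qed.

End Aux.

Lemma conv_ext (C : numClosedFieldType) (n k : nat) (P Q : op C n k -> Prop) r :
  (forall x, P x <-> Q x) -> (conv P r <-> conv Q r).
Proof.
move=> H; split => [[m [c [p [h1 h2 h3 h4]]]]|[m [c [p [h1 h2 h3 h4]]]]];
  exists m, c, p; split => // i; apply/H; exact: h3.
Qed.

Theorem mainTheorem1 (C : numClosedFieldType) (n k : nat) (hk : (2 <= k)%N) :
  [/\ (* (i) *)
      forall r : op C n k, boson_pure r ->
        (~ simple_boson_pure r <-> ~ seg_sym_range r),
      (* (ii) *)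
      forall r : op C n k, fermion_pure r ->
        (~ simple_fermion_pure r <-> ~ seg_wedge_range r),
      (* (iii), bosonic *)
      forall r : op C n k, boson_mixed r ->
        (~ conv (@simple_boson_pure C n k) r <-> ~ conv (@seg_sym_range C n k) r)
    & (* (iii), fermionic *)
      forall r : op C n k, fermion_mixed r ->
        (~ conv (@simple_fermion_pure C n k) r <-> ~ conv (@seg_wedge_range C n k) r)].
Proof.
case: k hk => [//|k'] _; split.
- by move=> r _; rewrite (boson_eq r).
- by move=> r _; rewrite (fermion_eq r).
- by move=> r _; rewrite (conv_ext r (@boson_eq C n k')).
- by move=> r _; rewrite (conv_ext r (@fermion_eq C n k')).
Qed.
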